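(* If $\Gamma_G$ is population monotonic, then $G$ has no induced subgraph isomorphic to the butterfly graph.
   Context: $G=(V,E;w)$ is a finite simple graph with edge weights $w:E\to\mathbb{R}$, $w_e>0$ for all $e\in E$. The matching game on $G$ is the cooperative game $\Gamma_G=(N,\gamma)$ with player set $N=V$ and, for $S\subseteq N$, $\gamma(S)$ equal to the maximum weight of a matching in the induced subgraph $G[S]$ (so $\gamma(\emptyset)=0$). A population monotonic allocation scheme (PMAS) is a family $(\boldsymbol{x}_S)_{\emptyset\neq S\subseteq N}$ with $\boldsymbol{x}_S=(x_{S,i})_{i\in S}\in\mathbb{R}^S$ such that (efficiency) $\sum_{i\in S}x_{S,i}=\gamma(S)$ for every nonempty $S\subseteq N$, and (monotonicity) $x_{S,i}\le x_{T,i}$ whenever $\emptyset\ne S\subseteq T\subseteq N$ and $i\in S$. $\Gamma_G$ is called population monotonic if it admits a PMAS. The butterfly graph is the graph on vertices $\{1,2,3,4,5\}$ with edge set exactly $\{12,13,23,34,35,45\}$ (two triangles sharing exactly the vertex $3$). *)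

(* Defs.v *)
From HB Require Import structures.
From mathcomp Require Import all_boot all_order all_algebra.
Set Implicit Arguments. Unset Strict Implicit. Unset Printing Implicit Defensive.
Import Order.TTheory GRing.Theory Num.Theory.
Local Open Scope ring_scope.

Definition simple_graph (T : finType) (e : rel T) : Prop :=
  (forall x y, e x y = e y x) /\ (forall x, ~~ e x x).

(* A matching of the induced subgraph G[S], represented as a set of ordered
   pairs (x, y), each being an edge with both ends in S, such that distinct
   pairs have disjoint endpoint sets (in particular (x,y) and (y,x) are not
   both present). *)
Definition is_matching (T : finType) (e : rel T) (S : {set T})
    (M : {set T * T}) : bool :=
  [forall p in M, [&& e p.1 p.2, p.1 \in S & p.2 \in S]] &&
  [forall p in M, forall q in M, (p != q) ==>
     [&& p.1 != q.1, p.1 != q.2, p.2 != q.1 & p.2 != q.2]].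

Definition matching_weight (R : realFieldType) (T : finType)
    (w : T -> T -> R) (M : {set T * T}) : R :=
  \sum_(p in M) w p.1 p.2.

(* gamma(S): maximum weight of a matching in G[S] (the empty matching is
   always available, so this is the max over all matchings, >= 0). *)
Definition match_value (R : realFieldType) (T : finType) (e : rel T)
    (w : T -> T -> R) (S : {set T}) : R :=
  \big[Num.max/0]_(M : {set T * T} | is_matching e S M) matching_weight w M.

Definition is_PMAS (R : realFieldType) (T : finType) (e : rel T)
    (w : T -> T -> R) (x : {set T} -> T -> R) : Prop :=
  (forall S : {set T}, S != set0 -> \sum_(i in S) x S i = match_value e w S) /\
  (forall (S U : {set T}) (i : T), S != set0 -> S \subset U -> i \in S ->
     x S i <= x U i).

Definition population_monotonic (R : realFieldType) (T : finType) (e : rel T)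
    (w : T -> T -> R) : Prop :=
  exists x : {set T} -> T -> R, is_PMAS e w x.

(* Butterfly graph on {0,..,4} (paper's vertices 1..5 shifted by -1):
   edges 01, 02, 12, 23, 24, 34. *)
Definition butterfly_edge (a b : 'I_5) : bool :=
  let a := nat_of_ord a in let b := nat_of_ord b in
  [|| (a == 0%N) && (b == 1%N), (a == 1%N) && (b == 0%N),
      (a == 0%N) && (b == 2%N), (a == 2%N) && (b == 0%N),
      (a == 1%N) && (b == 2%N), (a == 2%N) && (b == 1%N),
      (a == 2%N) && (b == 3%N), (a == 3%N) && (b == 2%N),
      (a == 2%N) && (b == 4%N), (a == 4%N) && (b == 2%N),
      (a == 3%N) && (b == 4%N) | (a == 4%N) && (b == 3%N)].

Definition has_induced_butterfly (T : finType) (e : rel T) : Prop :=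
  exists f : 'I_5 -> T, injective f /\
    (forall a b : 'I_5, a != b -> e (f a) (f b) = butterfly_edge a b).

(* Main.v *)
Require Import Defs.
From HB Require Import structures.
From mathcomp Require Import all_boot all_order all_algebra.
From mathcomp Require Import lra.
Import Order.TTheory GRing.Theory Num.Theory.
Local Open Scope ring_scope.

Lemma sum2 (R : realFieldType) (T : finType) (F : T -> R) i j : i != j ->
  \sum_(k in [set i; j]) F k = F i + F j.
Proof.
move=> ij.
have := @big_setU1 R 0 +%R T i [set j] F; rewrite inE => /(_ ij) h.
rewrite big_set1 in h; exact: h.
Qed.
Lemma sum1 (R : realFieldType) (T : finType) (F : T -> R) i :
  \sum_(k in [set i]) F k = F i.
Proof. exact: big_set1. Qed.
Lemma sum3 (R : realFieldType) (T : finType) (F : T -> R) a b c : a != b -> a != c -> b != c ->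
  \sum_(k in [set a; b; c]) F k = F a + F b + F c.
Proof.
move=> ab ac bc.
have -> : [set a; b; c] = a |: (b |: [set c]) by apply/setP => y; rewrite !inE orbA.
have := @big_setU1 R 0 +%R T a (b |: [set c]) F; rewrite !inE negb_or ab ac => /(_ isT) h.
have := @big_setU1 R 0 +%R T b [set c] F; rewrite !inE bc => /(_ isT) h2.
rewrite big_set1 in h2; rewrite h2 in h.
exact: (etrans h (addrA _ _ _)).
Qed.

Section H.
Variables (R : realFieldType) (T : finType) (e : rel T) (w : T -> T -> R).

Lemma mv_ge_edge (S : {set T}) i j : i \in S -> j \in S -> e i j ->
  w i j <= match_value e w S.
Proof.
move=> iS jS eij.
have M : is_matching e S [set (i, j)].
  apply/andP; split; apply/forallP => p; apply/implyP; rewrite inE => /eqP -> /=.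
    by rewrite eij iS jS.
  apply/forallP => q; apply/implyP; rewrite inE => /eqP ->.
  by rewrite eqxx.
have := le_bigmax_cond 0 (matching_weight w) M.
by rewrite /matching_weight big_set1.
Qed.

Lemma mv_ge0 (S : {set T}) : 0 <= match_value e w S.
Proof.
have M : is_matching e S set0.
  by apply/andP; split; apply/forallP => p; rewrite inE.
have := le_bigmax_cond 0 (matching_weight w) M.
by rewrite /matching_weight big_set0.
Qed.

Lemma mv_le (S : {set T}) (B : R) : (forall x, ~~ e x x) ->
  (#|S| <= 3)%N -> 0 <= B ->
  (forall x y, x \in S -> y \in S -> e x y -> w x y <= B) ->
  match_value e w S <= B.
Proof.
move=> irr cS B0 HB.
apply: bigmax_le => // M /andP[/forallP H1 /forallP H2].
have Hp : forall p, p \in M -> [&& e p.1 p.2, p.1 \in S & p.2 \in S].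
  by move=> p pM; have := H1 p; rewrite pM.
case: (set_0Vmem M) => [->|[p pM]]; first by rewrite /matching_weight big_set0.
have -> : M = [set p].
  apply/setP => q; rewrite inE; apply/idP/idP => [qM|/eqP -> //].
  apply/negPn/negP => npq.
  have := H2 q; rewrite qM /= => /forallP /(_ p); rewrite pM /= npq /=.
  case/and4P => d1 d2 d3 d4.
  case/and3P: (Hp p pM) => ep p1 p2; case/and3P: (Hp q qM) => eq' q1 q2.
  have dp : p.1 != p.2 by apply/eqP => h; move: ep; rewrite h (negbTE (irr _)).
  have dq : q.1 != q.2 by apply/eqP => h; move: eq'; rewrite h (negbTE (irr _)).
  have U : uniq [:: q.1; q.2; p.1; p.2].
    rewrite /= !inE !negb_or dq dp /=.
    apply/and3P; split => //; apply/andP; split.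
    - exact: d1.
    - exact: d2.
    - exact: d3.
    - exact: d4.
  have := uniq_leq_size U (s2 := enum S).
  rewrite -cardE /= => /(_ _) h.
  have : (4 <= #|S|)%N.
    apply: h => x; rewrite !inE mem_enum => /or4P [] /eqP -> //.
  by move/leq_trans/(_ cS).
rewrite /matching_weight big_set1.
by case/and3P: (Hp p pM) => ep p1 p2; apply: HB.
Qed.
End H.

Section H2.
Variables (R : realFieldType) (T : finType) (e : rel T) (w : T -> T -> R).
Hypotheses (esym : forall x y, e x y = e y x) (irr : forall x, ~~ e x x)
  (wsym : forall x y, w x y = w y x) (wpos : forall x y, e x y -> 0 < w x y).

Definition ew a b := if e a b then w a b else 0.

Lemma ew_ge0 a b : 0 <= ew a b.
Proof. by rewrite /ew; case: ifP => // /wpos /ltW. Qed.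

Lemma ew_sym a b : ew a b = ew b a.
Proof. by rewrite /ew esym wsym. Qed.

Lemma ew_ge a b : e a b -> w a b <= ew a b.
Proof. by rewrite /ew => ->. Qed.

Lemma set3E (a b c : T) : [set a; b; c] = a |: (b |: [set c]).
Proof. by apply/setP => y; rewrite !inE orbA. Qed.

Lemma set2E (a b : T) : [set a; b] = a |: [set b].
Proof. by apply/setP => y; rewrite !inE. Qed.

Lemma ew_ge' a b : e a b -> w b a <= ew a b.
Proof. by rewrite /ew wsym => ->. Qed.

Lemma card3 (a b c : T) : (#|[set a; b; c]| <= 3)%N.
Proof. by rewrite set3E !cardsU1 cards1; case: (_ \notin _); case: (_ \notin _). Qed.

Lemma card2 (a b : T) : (#|[set a; b]| <= 3)%N.
Proof. by rewrite !cardsU1 cards1; case: (_ \notin _). Qed.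

Lemma mv_le3 a b c : match_value e w [set a; b; c] <=
  Num.max (Num.max (ew a b) (ew a c)) (ew b c).
Proof.
apply: mv_le => //; first exact: card3.
  by rewrite !le_max ew_ge0.
move=> x y; rewrite !inE -!orbA => /or3P[]/eqP-> /or3P[]/eqP-> exy;
  try by move: exy; rewrite (negbTE (irr _)).
all: have exy' := exy; rewrite esym in exy'.
all: rewrite !le_max.
all: first [ by rewrite ew_ge ?orbT | by rewrite ew_ge' ?orbT ].
Qed.

Lemma mv_le2 a b : e a b -> match_value e w [set a; b] <= w a b.
Proof.
move=> eab; apply: mv_le => //; first exact: card2.
  exact/ltW/wpos.
move=> x y; rewrite !inE => /orP[]/eqP-> /orP[]/eqP-> exy //;
  try by move: exy; rewrite (negbTE (irr _)).
by rewrite wsym.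
Qed.

Variable x : {set T} -> T -> R.
Hypothesis PM : is_PMAS e w x.

Lemma mon2 (i j : T) (U : {set T}) : i \in U -> j \in U ->
  x [set i; j] i <= x U i.
Proof.
move=> iU jU; case: PM => _ mon; apply: mon.
- by apply/set0Pn; exists i; rewrite !inE eqxx.
- by apply/subsetP => y; rewrite !inE => /orP[]/eqP->.
- by rewrite !inE eqxx.
Qed.

Lemma mon2' (i j : T) (U : {set T}) : i \in U -> j \in U ->
  x [set i; j] j <= x U j.
Proof.
move=> iU jU; case: PM => _ mon; apply: mon.
- by apply/set0Pn; exists i; rewrite !inE eqxx.
- by apply/subsetP => y; rewrite !inE => /orP[]/eqP->.
- by rewrite !inE eqxx orbT.
Qed.

Lemma pair_facts (i j : T) : e i j ->
  [/\ 0 <= x [set i; j] i, 0 <= x [set i; j] j &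
      x [set i; j] i + x [set i; j] j = w i j].
Proof.
move=> eij; have ij : i != j by apply/eqP => h; move: eij; rewrite h (negbTE (irr _)).
case: PM => eff mon.
have pos k : k \in [set i; j] -> 0 <= x [set i; j] k.
  move=> kS; apply: le_trans (mon [set k] _ k _ _ _); last by rewrite inE.
  - have := eff [set k]; rewrite sum1 => ->; last by apply/set0Pn; exists k; rewrite inE.
    exact: mv_ge0.
  - by apply/set0Pn; exists k; rewrite inE.
  - by rewrite sub1set.
split; [apply: pos; rewrite !inE eqxx ?orbT //..|].
have := eff [set i; j]; rewrite sum2 //.
move=> ->; last by apply/set0Pn; exists i; rewrite !inE eqxx.
apply/le_anti; rewrite mv_le2 //=; apply: mv_ge_edge => //; by rewrite !inE eqxx ?orbT.
Qed.

Lemma tri_sum (a b c : T) : a != b -> a != c -> b != c ->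
  x [set a; b; c] a + x [set a; b; c] b + x [set a; b; c] c <=
  Num.max (Num.max (ew a b) (ew a c)) (ew b c).
Proof.
move=> ab ac bc; case: PM => eff _.
have := eff [set a; b; c]; rewrite sum3 //.
move=> ->; last by apply/set0Pn; exists a; rewrite !inE eqxx.
exact: mv_le3.
Qed.

End H2.

Theorem mainTheorem12 (R : realFieldType) (T : finType) (e : rel T)
    (w : T -> T -> R) :
  simple_graph e ->
  (forall x y, w x y = w y x) ->
  (forall x y, e x y -> 0 < w x y) ->
  population_monotonic e w ->
  ~ has_induced_butterfly e.
Proof.
move=> [esym irr] wsym wpos [x PM] [f [finj fe]].
pose A := f (@Ordinal 5 0 isT); pose B := f (@Ordinal 5 1 isT);
pose C := f (@Ordinal 5 2 isT); pose D := f (@Ordinal 5 3 isT);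
pose E := f (@Ordinal 5 4 isT).
have eAB : e A B by rewrite fe.
have eAC : e A C by rewrite fe.
have eBC : e B C by rewrite fe.
have eCD : e C D by rewrite fe.
have eCE : e C E by rewrite fe.
have eDE : e D E by rewrite fe.
have nAD : e A D = false by rewrite fe.
have nAE : e A E = false by rewrite fe.
have nBD : e B D = false by rewrite fe.
have nBE : e B E = false by rewrite fe.
have dAB : A != B by rewrite (inj_eq finj).
have dAC : A != C by rewrite (inj_eq finj).
have dAD : A != D by rewrite (inj_eq finj).
have dAE : A != E by rewrite (inj_eq finj).
have dBC : B != C by rewrite (inj_eq finj).
have dBD : B != D by rewrite (inj_eq finj).
have dBE : B != E by rewrite (inj_eq finj).
have dCD : C != D by rewrite (inj_eq finj).
have dCE : C != E by rewrite (inj_eq finj).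
have dDE : D != E by rewrite (inj_eq finj).
have wAB := wpos _ _ eAB. have wAC := wpos _ _ eAC. have wBC := wpos _ _ eBC.
have wCD := wpos _ _ eCD. have wCE := wpos _ _ eCE. have wDE := wpos _ _ eDE.
have [pAB1 pAB2 pAB3] := @pair_facts R T e w irr wsym wpos x PM _ _ eAB.
have [pAC1 pAC2 pAC3] := @pair_facts R T e w irr wsym wpos x PM _ _ eAC.
have [pBC1 pBC2 pBC3] := @pair_facts R T e w irr wsym wpos x PM _ _ eBC.
have [pCD1 pCD2 pCD3] := @pair_facts R T e w irr wsym wpos x PM _ _ eCD.
have [pCE1 pCE2 pCE3] := @pair_facts R T e w irr wsym wpos x PM _ _ eCE.
have [pDE1 pDE2 pDE3] := @pair_facts R T e w irr wsym wpos x PM _ _ eDE.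
have T1 := @tri_sum R T e w esym irr wsym wpos x PM _ _ _ dAB dAC dBC.
have T2 := @tri_sum R T e w esym irr wsym wpos x PM _ _ _ dCD dCE dDE.
have Q1 := @tri_sum R T e w esym irr wsym wpos x PM _ _ _ dAC dAD dCD.
have Q2 := @tri_sum R T e w esym irr wsym wpos x PM _ _ _ dAC dAE dCE.
have Q3 := @tri_sum R T e w esym irr wsym wpos x PM _ _ _ dBC dBD dCD.
have Q4 := @tri_sum R T e w esym irr wsym wpos x PM _ _ _ dBC dBE dCE.
move: T1 T2 Q1 Q2 Q3 Q4; rewrite /ew eAB eAC eBC eCD eCE eDE nAD nAE nBD nBE.
have m1 := @mon2 R T e w x PM A B [set A; B; C] (ltac:(by rewrite !inE eqxx ?orbT)) (ltac:(by rewrite !inE eqxx ?orbT)).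
have m2 := @mon2' R T e w x PM A B [set A; B; C] (ltac:(by rewrite !inE eqxx ?orbT)) (ltac:(by rewrite !inE eqxx ?orbT)).
have m3 := @mon2 R T e w x PM A C [set A; B; C] (ltac:(by rewrite !inE eqxx ?orbT)) (ltac:(by rewrite !inE eqxx ?orbT)).
have m4 := @mon2' R T e w x PM A C [set A; B; C] (ltac:(by rewrite !inE eqxx ?orbT)) (ltac:(by rewrite !inE eqxx ?orbT)).
have m5 := @mon2 R T e w x PM B C [set A; B; C] (ltac:(by rewrite !inE eqxx ?orbT)) (ltac:(by rewrite !inE eqxx ?orbT)).
have m6 := @mon2' R T e w x PM B C [set A; B; C] (ltac:(by rewrite !inE eqxx ?orbT)) (ltac:(by rewrite !inE eqxx ?orbT)).
have m7 := @mon2 R T e w x PM C D [set C; D; E] (ltac:(by rewrite !inE eqxx ?orbT)) (ltac:(by rewrite !inE eqxx ?orbT)).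
have m8 := @mon2' R T e w x PM C D [set C; D; E] (ltac:(by rewrite !inE eqxx ?orbT)) (ltac:(by rewrite !inE eqxx ?orbT)).
have m9 := @mon2 R T e w x PM C E [set C; D; E] (ltac:(by rewrite !inE eqxx ?orbT)) (ltac:(by rewrite !inE eqxx ?orbT)).
have m10 := @mon2' R T e w x PM C E [set C; D; E] (ltac:(by rewrite !inE eqxx ?orbT)) (ltac:(by rewrite !inE eqxx ?orbT)).
have m11 := @mon2 R T e w x PM D E [set C; D; E] (ltac:(by rewrite !inE eqxx ?orbT)) (ltac:(by rewrite !inE eqxx ?orbT)).
have m12 := @mon2' R T e w x PM D E [set C; D; E] (ltac:(by rewrite !inE eqxx ?orbT)) (ltac:(by rewrite !inE eqxx ?orbT)).
have m13 := @mon2 R T e w x PM A C [set A; C; D] (ltac:(by rewrite !inE eqxx ?orbT)) (ltac:(by rewrite !inE eqxx ?orbT)).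
have m14 := @mon2' R T e w x PM A C [set A; C; D] (ltac:(by rewrite !inE eqxx ?orbT)) (ltac:(by rewrite !inE eqxx ?orbT)).
have m15 := @mon2 R T e w x PM C D [set A; C; D] (ltac:(by rewrite !inE eqxx ?orbT)) (ltac:(by rewrite !inE eqxx ?orbT)).
have m16 := @mon2' R T e w x PM C D [set A; C; D] (ltac:(by rewrite !inE eqxx ?orbT)) (ltac:(by rewrite !inE eqxx ?orbT)).
have m17 := @mon2 R T e w x PM A C [set A; C; E] (ltac:(by rewrite !inE eqxx ?orbT)) (ltac:(by rewrite !inE eqxx ?orbT)).
have m18 := @mon2' R T e w x PM A C [set A; C; E] (ltac:(by rewrite !inE eqxx ?orbT)) (ltac:(by rewrite !inE eqxx ?orbT)).
have m19 := @mon2 R T e w x PM C E [set A; C; E] (ltac:(by rewrite !inE eqxx ?orbT)) (ltac:(by rewrite !inE eqxx ?orbT)).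
have m20 := @mon2' R T e w x PM C E [set A; C; E] (ltac:(by rewrite !inE eqxx ?orbT)) (ltac:(by rewrite !inE eqxx ?orbT)).
have m21 := @mon2 R T e w x PM B C [set B; C; D] (ltac:(by rewrite !inE eqxx ?orbT)) (ltac:(by rewrite !inE eqxx ?orbT)).
have m22 := @mon2' R T e w x PM B C [set B; C; D] (ltac:(by rewrite !inE eqxx ?orbT)) (ltac:(by rewrite !inE eqxx ?orbT)).
have m23 := @mon2 R T e w x PM C D [set B; C; D] (ltac:(by rewrite !inE eqxx ?orbT)) (ltac:(by rewrite !inE eqxx ?orbT)).
have m24 := @mon2' R T e w x PM C D [set B; C; D] (ltac:(by rewrite !inE eqxx ?orbT)) (ltac:(by rewrite !inE eqxx ?orbT)).
have m25 := @mon2 R T e w x PM B C [set B; C; E] (ltac:(by rewrite !inE eqxx ?orbT)) (ltac:(by rewrite !inE eqxx ?orbT)).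
have m26 := @mon2' R T e w x PM B C [set B; C; E] (ltac:(by rewrite !inE eqxx ?orbT)) (ltac:(by rewrite !inE eqxx ?orbT)).
have m27 := @mon2 R T e w x PM C E [set B; C; E] (ltac:(by rewrite !inE eqxx ?orbT)) (ltac:(by rewrite !inE eqxx ?orbT)).
have m28 := @mon2' R T e w x PM C E [set B; C; E] (ltac:(by rewrite !inE eqxx ?orbT)) (ltac:(by rewrite !inE eqxx ?orbT)).
rewrite !le_max => h1 h2 q1 q2 q3 q4.
case/orP: h1 => [/orP[]|] h1; case/orP: h2 => [/orP[]|] h2.
- by case/orP: q2 => [/orP[]|] q; lra.
- by case/orP: q1 => [/orP[]|] q; lra.
- by case/orP: q1 => [/orP[]|] q; lra.
- by case/orP: q1 => [/orP[]|] q; lra.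
- by case/orP: q2 => [/orP[]|] q; lra.
- by case/orP: q3 => [/orP[]|] q; lra.
- by case/orP: q3 => [/orP[]|] q; lra.
- by case/orP: q4 => [/orP[]|] q; lra.
- by case/orP: q1 => [/orP[]|] q; lra.
Qed.
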